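(* For every $n\times r$ basis matrix $P$ and every positive integer $s$, $\delta_s(I-PP')=\kappa_s^2(P)$.
   Context: A basis matrix is a real matrix $P$ with $P'P=I$. For $T\subseteq\{1,\dots,n\}$, $I_T$ is the submatrix of the $n\times n$ identity with columns in $T$, and $\Psi_T:=\Psi I_T$. The $s$-restricted isometry constant $\delta_s(\Psi)$ of an $n\times m$ matrix $\Psi$ is the smallest real number such that $(1-\delta_s)\|x\|_2^2\le\|\Psi_Tx\|_2^2\le(1+\delta_s)\|x\|_2^2$ for all $T$ with $|T|\le s$ and all $x\in\mathbb R^{|T|}$. The denseness coefficient is $\kappa_s(B):=\max_{|T|\le s}\|I_T'\,\mathrm{basis}(B)\|_2$, where $\mathrm{basis}(B)$ is a basis matrix with the same column span as $B$; for a basis matrix $P$, $\kappa_s(P)=\max_{|T|\le s}\|I_T'P\|_2$. *)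

(* Defs.v *)
From HB Require Import structures.
From mathcomp Require Import all_boot all_order all_algebra.
From mathcomp Require Import classical_sets reals.
Set Implicit Arguments. Unset Strict Implicit. Unset Printing Implicit Defensive.
Import Order.TTheory GRing.Theory Num.Theory.
Local Open Scope ring_scope.
Local Open Scope classical_set_scope.

Section Defs.
Variable R : realType.

Definition sqnorm (k : nat) (v : 'cV[R]_k) : R := \sum_(i < k) (v i 0) ^+ 2.

Definition vnorm (k : nat) (v : 'cV[R]_k) : R := Num.sqrt (sqnorm v).

Definition opnorm (m k : nat) (A : 'M[R]_(m, k)) : R :=
  sup [set vnorm (A *m x) | x in [set x : 'cV[R]_k | vnorm x <= 1]].

Definition I_T (n : nat) (T : {set 'I_n}) : 'M[R]_(n, #|T|) :=
  \matrix_(i < n, j < #|T|) (i == enum_val j)%:R.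

Definition basis_matrix (n r : nat) (P : 'M[R]_(n, r)) : Prop :=
  P^T *m P = 1%:M.

Definition rip_const (n m s : nat) (Psi : 'M[R]_(n, m)) : R :=
  inf [set d : R | forall T : {set 'I_m}, (#|T| <= s)%N ->
         forall x : 'cV[R]_(#|T|),
           (1 - d) * sqnorm x <= sqnorm ((Psi *m I_T T) *m x) /\
           sqnorm ((Psi *m I_T T) *m x) <= (1 + d) * sqnorm x].

Definition kappa (n r s : nat) (P : 'M[R]_(n, r)) : R :=
  \big[Num.max/0]_(T : {set 'I_n} | (#|T| <= s)%N) opnorm ((I_T T)^T *m P).

End Defs.

(* Main.v *)
Require Import Defs.
From HB Require Import structures.
From mathcomp Require Import all_boot all_order all_algebra.
From mathcomp Require Import classical_sets reals.
From mathcomp Require Import lra.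
Set Implicit Arguments. Unset Strict Implicit.
Import Order.TTheory GRing.Theory Num.Theory.
Local Open Scope ring_scope.
Local Open Scope classical_set_scope.

Section H.
Variable R : realType.

Definition dot (k : nat) (u v : 'cV[R]_k) : R := (u^T *m v) 0 0.

Lemma sqnormE k (v : 'cV[R]_k) : sqnorm v = dot v v.
Proof. rewrite /sqnorm /dot mxE; apply: eq_bigr => i _; by rewrite !mxE expr2. Qed.

Lemma sqnorm_ge0 k (v : 'cV[R]_k) : 0 <= sqnorm v.
Proof. by apply: sumr_ge0 => i _; rewrite sqr_ge0. Qed.

Lemma sqnorm_eq0 k (v : 'cV[R]_k) : sqnorm v = 0 -> v = 0.
Proof.
move=> /eqP; rewrite /sqnorm psumr_eq0; last by move=> i _; rewrite sqr_ge0.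
move=> /allP H; apply/matrixP => i j; rewrite (ord1 j) mxE.
by have := H i (mem_index_enum i); rewrite sqrf_eq0 => /eqP.
Qed.

Lemma sqnormZ k a (v : 'cV[R]_k) : sqnorm (a *: v) = a ^+ 2 * sqnorm v.
Proof. rewrite /sqnorm mulr_sumr; apply: eq_bigr => i _; by rewrite mxE exprMn. Qed.

Lemma dotC k (u v : 'cV[R]_k) : dot u v = dot v u.
Proof. rewrite /dot -[in RHS](trmxK u) -(trmx_mul (u^T) v). by rewrite [RHS]mxE. Qed.

Lemma dotBl k (u v w : 'cV[R]_k) : dot (u - v) w = dot u w - dot v w.
Proof. rewrite /dot linearB /= mulmxBl. by rewrite [LHS]mxE [X in _ + X]mxE. Qed.

Lemma dotBr k (u v w : 'cV[R]_k) : dot w (u - v) = dot w u - dot w v.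
Proof. by rewrite dotC dotBl !(dotC w). Qed.

Lemma sqnormB k (u v : 'cV[R]_k) :
  sqnorm (u - v) = sqnorm u - 2 * dot u v + sqnorm v.
Proof. rewrite !sqnormE dotBl !dotBr (dotC v u); lra. Qed.

Lemma dotZl k a (u v : 'cV[R]_k) : dot (a *: u) v = a * dot u v.
Proof. by rewrite /dot linearZ /= -scalemxAl mxE. Qed.

Lemma dotA m k (A : 'M[R]_(m, k)) (z : 'cV[R]_k) (y : 'cV[R]_m) :
  dot (A *m z) y = dot z (A^T *m y).
Proof. by rewrite /dot trmx_mul mulmxA. Qed.

Lemma dual m k (A : 'M[R]_(m, k)) (c : R) : 0 <= c ->
  (forall z, sqnorm (A *m z) <= c * sqnorm z) ->
  forall y, sqnorm (A^T *m y) <= c * sqnorm y.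
Proof.
move=> c0 H y; set z := A^T *m y.
have HY : sqnorm z = dot (A *m z) y by rewrite dotA sqnormE.
have Hl : forall l, 2 * l * sqnorm z <= l ^+ 2 * (c * sqnorm z) + sqnorm y.
  move=> l; have := sqnorm_ge0 (l *: (A *m z) - y).
  rewrite sqnormB sqnormZ dotZl -HY => h.
  have := H z; have := sqnorm_ge0 (A *m z); have := sqnorm_ge0 y.
  have : 0 <= l ^+ 2 by rewrite sqr_ge0.
  nra.
have [c0'|cgt0] := eqVneq c 0.
  have : sqnorm (A *m z) = 0.
    by apply/le_anti; rewrite sqnorm_ge0 andbT; have := H z; rewrite c0' mul0r.
  move/sqnorm_eq0 => Az0; rewrite HY Az0 /dot trmx0 mul0mx mxE.
  by rewrite c0' mul0r.
have cpos : 0 < c by rewrite lt0r cgt0.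
have := Hl c^-1.
have hc : c^-1 ^+ 2 * (c * sqnorm z) = c^-1 * sqnorm z.
  by rewrite expr2 -mulrA (mulrA c^-1 c) mulVf // mul1r.
rewrite hc => h.
have : c^-1 * sqnorm z <= sqnorm y by lra.
by rewrite ler_pdivrMl.
Qed.

Lemma vnorm_ge0 k (v : 'cV[R]_k) : 0 <= vnorm v.
Proof. exact: sqrtr_ge0. Qed.

Lemma vnorm_le1 k (v : 'cV[R]_k) : (vnorm v <= 1) = (sqnorm v <= 1).
Proof. by rewrite /vnorm -{1}sqrtr1 ler_sqrt. Qed.

Lemma sqr_vnorm k (v : 'cV[R]_k) : vnorm v ^+ 2 = sqnorm v.
Proof. by rewrite sqr_sqrtr // sqnorm_ge0. Qed.

Section Op.
Variables (m k : nat) (A : 'M[R]_(m, k)).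
Hypothesis HA : forall z, sqnorm (A *m z) <= sqnorm z.

Let E := [set vnorm (A *m x) | x in [set x : 'cV[R]_k | vnorm x <= 1]].

Lemma E_sup : has_sup E.
Proof.
split.
  exists (vnorm (A *m 0)), 0 => //=.
  by rewrite vnorm_le1 /sqnorm big1 // => i _; rewrite mxE expr0n.
exists 1 => _ [x /= hx <-].
by rewrite vnorm_le1 (le_trans (HA x)) // -vnorm_le1.
Qed.

Lemma opnorm_ge0 : 0 <= opnorm A.
Proof.
apply: le_trans (vnorm_ge0 (A *m 0)) _.
apply: sup_upper_bound; first exact: E_sup.
exists 0 => //=.
by rewrite vnorm_le1 /sqnorm big1 // => i _; rewrite mxE expr0n.
Qed.

Lemma opnorm_bound z : sqnorm (A *m z) <= opnorm A ^+ 2 * sqnorm z.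
Proof.
have [z0|zn0] := eqVneq (sqnorm z) 0.
  rewrite z0 mulr0 (sqnorm_eq0 z0) mulmx0 /sqnorm big1 // => i _; by rewrite mxE expr0n.
have kpos : 0 < vnorm z.
  by rewrite /vnorm sqrtr_gt0 lt0r zn0 sqnorm_ge0.
set z' := (vnorm z)^-1 *: z.
have hz' : sqnorm z' = 1.
  rewrite /z' sqnormZ -sqr_vnorm exprVn mulVf //.
  by rewrite expf_neq0 // gt_eqF.
have hle : vnorm (A *m z') <= opnorm A.
  apply: sup_upper_bound; first exact: E_sup.
  by exists z' => //=; rewrite vnorm_le1 hz'.
have : sqnorm (A *m z') <= opnorm A ^+ 2.
  rewrite -sqr_vnorm lerXn2r // ?nnegrE ?vnorm_ge0 //.
  exact: le_trans (vnorm_ge0 _) hle.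
rewrite /z' -scalemxAr sqnormZ exprVn -sqr_vnorm.
have kk : 0 < vnorm z ^+ 2 by rewrite exprn_gt0.
move=> h; rewrite -(sqr_vnorm z) mulrC.
have -> : vnorm (A *m z) ^+ 2 = vnorm z ^+ 2 * (vnorm z ^- 2 * vnorm (A *m z) ^+ 2).
  by rewrite mulrA mulfV ?mul1r // gt_eqF.
by rewrite ler_pM2l.
Qed.

Lemma opnorm_le c : 0 <= c -> (forall z, sqnorm (A *m z) <= c ^+ 2 * sqnorm z) ->
  opnorm A <= c.
Proof.
move=> c0 H; apply: ge_sup; first by case: E_sup.
move=> _ [x /= hx <-].
rewrite /vnorm -(ger0_norm c0) -sqrtr_sqr ler_sqrt ?sqr_ge0 //.
apply: le_trans (H x) _.
by rewrite -[X in _ <= X]mulr1 ler_wpM2l ?sqr_ge0 // -vnorm_le1.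
Qed.
End Op.

Lemma ITTI n (T : {set 'I_n}) : (I_T R T)^T *m I_T R T = 1%:M.
Proof.
apply/matrixP => j l; rewrite !mxE (bigD1 (enum_val j)) //= big1 => [|i /negbTE hi].
  by rewrite !mxE eqxx mul1r addr0 (inj_eq enum_val_inj).
by rewrite !mxE hi mul0r.
Qed.

Lemma sqnormIT n (T : {set 'I_n}) x : sqnorm (I_T R T *m x) = sqnorm x.
Proof. by rewrite !sqnormE dotA mulmxA ITTI mul1mx. Qed.

Lemma fact1 n r (P : 'M[R]_(n, r)) w : basis_matrix P ->
  sqnorm ((1%:M - P *m P^T) *m w) = sqnorm w - sqnorm (P^T *m w).
Proof.
move=> HP; rewrite mulmxBl mul1mx -mulmxA sqnormB.
have h1 : dot w (P *m (P^T *m w)) = sqnorm (P^T *m w).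
  by rewrite dotC dotA sqnormE.
have h2 : sqnorm (P *m (P^T *m w)) = sqnorm (P^T *m w).
  by rewrite sqnormE dotA mulmxA HP mul1mx sqnormE.
rewrite h1 h2; lra.
Qed.

Lemma sqnorm_nil p (v : 'cV[R]_p) : p = 0%N -> sqnorm v = 0.
Proof. by move=> p0; subst p; rewrite /sqnorm big_ord0. Qed.

End H.

Theorem lemma4 (R : realType) (n r : nat) (P : 'M[R]_(n, r)) (s : nat) :
  basis_matrix P -> (0 < s)%N ->
  rip_const s (1%:M - P *m P^T) = (kappa s P) ^+ 2.
Proof.
move=> HP s0.
set A := fun T : {set 'I_n} => (I_T R T)^T *m P.
have F1 : forall T x, sqnorm (((1%:M - P *m P^T) *m I_T R T) *m x)
    = sqnorm x - sqnorm ((A T)^T *m x).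
  move=> T x; rewrite -[X in sqnorm X]mulmxA fact1 // sqnormIT /A trmx_mul trmxK mulmxA //.
have HAt : forall T z, sqnorm ((A T)^T *m z) <= 1 * sqnorm z.
  move=> T z; rewrite mul1r; have := sqnorm_ge0 (((1%:M - P *m P^T) *m I_T R T) *m z).
  rewrite F1; lra.
have HA : forall T z, sqnorm (A T *m z) <= sqnorm z.
  move=> T z; have := dual ler01 (HAt T) z; by rewrite trmxK mul1r.
have Kk : forall T : {set 'I_n}, (#|T| <= s)%N -> opnorm (A T) <= kappa s P.
  move=> T hT; rewrite /kappa; exact: (le_bigmax_cond _ (fun T => opnorm ((I_T R T)^T *m P))).
have k0 : 0 <= kappa s P.
  apply: le_trans (opnorm_ge0 (HA finset.set0)) (Kk finset.set0 _).
  by rewrite cards0.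
rewrite /rip_const.
set S := [set d | _].
have inS : S (kappa s P ^+ 2).
  move=> T hT x; rewrite F1.
  have hb := dual (sqr_ge0 (opnorm (A T))) (opnorm_bound (HA T)) x.
  have o0 := opnorm_ge0 (HA T); have ok := Kk T hT.
  have q0 := sqnorm_ge0 ((A T)^T *m x); have x0 := sqnorm_ge0 x.
  have : opnorm (A T) ^+ 2 <= kappa s P ^+ 2 by rewrite lerXn2r // nnegrE.
  by move=> h; split; nra.
have [i0 _|nI0] := pickP (fun _ : 'I_n => true).
  have lb : forall d, S d -> kappa s P ^+ 2 <= d.
    move=> d Hd.
    have d0 : 0 <= d.
      have hT0 : (#|finset.set1 i0| <= s)%N by rewrite cards1.
      have := Hd _ hT0 (const_mx 1).
      have sx : sqnorm (const_mx 1 : 'cV[R]_#|finset.set1 i0|) = 1.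
        rewrite /sqnorm (eq_bigr (fun _ => 1)) => [|i _]; last by rewrite mxE expr1n.
        by rewrite sumr_const card_ord cards1.
      rewrite F1 sx => -[h _]; have := sqnorm_ge0 ((A (finset.set1 i0))^T *m const_mx 1).
      lra.
    have ks : kappa s P <= Num.sqrt d.
      apply: bigmax_le; first exact: sqrtr_ge0.
      move=> T hT; apply: (opnorm_le (HA T)); first exact: sqrtr_ge0.
      rewrite sqr_sqrtr //.
      have h : forall x, sqnorm ((A T)^T *m x) <= d * sqnorm x.
        move=> x; have [h1 _] := Hd T hT x; move: h1; rewrite F1; lra.
      by move=> z; have := dual d0 h z; rewrite trmxK.
    have := sqr_sqrtr d0; have := sqrtr_ge0 d; nra.
  apply/le_anti/andP; split.
    apply: (ge_inf _ inS); exists (kappa s P ^+ 2) => d; exact: lb.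
  by apply: lb_le_inf; [exists (kappa s P ^+ 2) | move=> d; exact: lb].
have nI : forall i : 'I_n, False by move=> i; have := nI0 i.
have cT : forall T : {set 'I_n}, #|T| = 0%N.
  move=> T; apply/eqP; rewrite cards_eq0; apply/eqP/setP => i; by case: (nI i).
have kz : kappa s P = 0.
  apply/le_anti; rewrite k0 andbT; apply: bigmax_le => // T hT.
  apply: (opnorm_le (HA T)) => // z; by rewrite (sqnorm_nil _ (cT T)) expr0n mul0r.
rewrite kz expr0n /= inf_out // => -[_ [l Hl]].
have : S (l - 1).
  move=> T hT x; rewrite (sqnorm_nil x (cT T)).
  have -> : sqnorm ((1%:M - P *m P^T) *m I_T R T *m x) = 0.
    by rewrite /sqnorm big1 // => i; case: (nI i).
  by rewrite !mulr0.
move/Hl => h; have : l - 1 < l by rewrite ltrBlDr ltrDl ltr01.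
by rewrite ltNge h.
Qed.
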